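(* Let $\mathcal M=(X,\mathcal A,\mu,\mu^{\otimes2},R,I,\Pi_R,G,E_0,\eta)$ and $\mathcal M'=(X',\mathcal A',\mu',\mu'^{\otimes2},R',I',\Pi_{R'},G',E_0',\eta)$ be admissible structural models with a common $\eta\in[0,1)$, and let $\phi:\mathcal M\to\mathcal M'$ be a morphism. Then: (i) If $(\phi\times\phi)^{-1}(G')\subseteq G$, then for every $B'\in\mathcal A'$, \[\mu'^{\otimes2}((B'\times X')\cap G')\le\mu^{\otimes2}((\phi^{-1}(B')\times X)\cap G)=\mu(\phi^{-1}(B'))+\eta\,\mu^{\otimes2}((\Pi_R^{-1}(\phi^{-1}(B'))\times X)\cap G).\] (ii) If in addition $\phi$ is surjective and $(\phi\times\phi)^{-1}(G')=G$, then for every $B'\in\mathcal A'$, \[\mu'^{\otimes2}((B'\times X')\cap G')=\mu'(B')+\eta\,\mu'^{\otimes2}((\Pi_{R'}^{-1}(B')\times X')\cap G').\]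
   Context: An admissible structural model is a tuple $(X,\mathcal A,\mu,\mu^{\otimes2},R,I,\Pi_R,G,E_0,\eta)$ with $X$ nonempty, $\mathcal A\subseteq\mathcal P(X)$ an algebra, $\mu:\mathcal A\to[0,\infty)$ finitely additive, $\mu^{\otimes2}$ finitely additive on the algebra $\mathcal A\otimes\mathcal A$ generated by rectangles with $\mu^{\otimes2}(B_1\times B_2)=\mu(B_1)\mu(B_2)$, $R,I\in\mathcal A$ disjoint, $\Pi_R:X\to R$ a map, $G\in\mathcal A\otimes\mathcal A$, $E_0>0$, $\eta\in[0,1]$, satisfying: Axiom I: $\Pi_R\circ\Pi_R=\Pi_R$, $\Pi_R|_R=\mathrm{id}_R$, $\Pi_R^{-1}(B)\in\mathcal A$ for $B\in\mathcal A$, $B\subseteq R$; Axiom II: $G$ reflexive, symmetric, $G\circ G=G$ (relational composition); Axiom III: $\mu(R)+\mu(I)=E_0$, $\mu(\Pi_R^{-1}(B))=\mu(B)$ for $B\in\mathcal A$, $B\subseteq R$, and for all $B\in\mathcal A$, $\mu^{\otimes2}((B\times X)\cap G)=\mu(B)+\eta\,\mu^{\otimes2}((\Pi_R^{-1}(B)\times X)\cap G)$. A morphism $\phi:\mathcal M\to\mathcal M'$ between admissible structural models with the same $\eta$ (the $E_0,E_0'$ may differ) is a map $\phi:X\to X'$ such that: (M1) $\phi^{-1}(B')\in\mathcal A$ for all $B'\in\mathcal A'$ and $(\phi\times\phi)^{-1}(S')\in\mathcal A\otimes\mathcal A$ for all $S'\in\mathcal A'\otimes\mathcal A'$; (M2)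 $\phi\circ\Pi_R=\Pi_{R'}\circ\phi$; (M3) $(x,y)\in G$ implies $(\phi(x),\phi(y))\in G'$; (M4) $\mu(\phi^{-1}(B'))=\mu'(B')$ for all $B'\in\mathcal A'$ and $\mu^{\otimes2}((\phi\times\phi)^{-1}(S'))=\mu'^{\otimes2}(S')$ for all $S'\in\mathcal A'\otimes\mathcal A'$. *)

(* Defs.v *)
From Stdlib Require Import Reals.
Open Scope R_scope.

Definition set (T : Type) := T -> Prop.

Definition set0 {T} : set T := fun _ => False.
Definition setT {T} : set T := fun _ => True.
Definition setC {T} (A : set T) : set T := fun x => ~ A x.
Definition setU {T} (A B : set T) : set T := fun x => A x \/ B x.
Definition setI {T} (A B : set T) : set T := fun x => A x /\ B x.
Definition subset {T} (A B : set T) : Prop := forall x, A x -> B x.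
Definition disjoint {T} (A B : set T) : Prop := forall x, A x -> B x -> False.
Definition preimage {T U} (f : T -> U) (B : set U) : set T := fun x => B (f x).
Definition rect {T U} (B1 : set T) (B2 : set U) : set (T * U) :=
  fun p => B1 (fst p) /\ B2 (snd p).
Definition prodmap {T U} (f : T -> U) : T * T -> U * U :=
  fun p => (f (fst p), f (snd p)).

Definition is_algebra {T} (A : set (set T)) : Prop :=
  A set0 /\ (forall B, A B -> A (setC B)) /\
  (forall B C, A B -> A C -> A (setU B C)).

Definition prod_alg {T} (A : set (set T)) : set (set (T * T)) :=
  fun S => forall C : set (set (T * T)), is_algebra C ->
    (forall B1 B2, A B1 -> A B2 -> C (rect B1 B2)) -> C S.

Definition fin_add_measure {T} (A : set (set T)) (m : set T -> R) : Prop :=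
  (forall B, A B -> 0 <= m B) /\ m set0 = 0 /\
  (forall B C, A B -> A C -> disjoint B C -> m (setU B C) = m B + m C).

Definition relcomp {T} (G H : set (T * T)) : set (T * T) :=
  fun p => exists y, G (fst p, y) /\ H (y, snd p).

Record structural_model := {
  X : Type;
  alg : set (set X);
  mu : set X -> R;
  mu2 : set (X * X) -> R;
  Rs : set X;
  Is : set X;
  PiR : X -> X;
  G : set (X * X);
  E0 : R;
  eta : R }.

Definition admissible (M : structural_model) : Prop :=
  inhabited (X M) /\
  is_algebra (alg M) /\
  fin_add_measure (alg M) (mu M) /\
  fin_add_measure (prod_alg (alg M)) (mu2 M) /\
  (forall B1 B2, alg M B1 -> alg M B2 ->
     mu2 M (rect B1 B2) = mu M B1 * mu M B2) /\
  alg M (Rs M) /\ alg M (Is M) /\ disjoint (Rs M) (Is M) /\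
  (forall x, Rs M (PiR M x)) /\
  prod_alg (alg M) (G M) /\
  0 < E0 M /\ 0 <= eta M <= 1 /\
  (* Axiom I *)
  (forall x, PiR M (PiR M x) = PiR M x) /\
  (forall x, Rs M x -> PiR M x = x) /\
  (forall B, alg M B -> subset B (Rs M) -> alg M (preimage (PiR M) B)) /\
  (* Axiom II *)
  (forall x, G M (x, x)) /\
  (forall x y, G M (x, y) -> G M (y, x)) /\
  (forall p, relcomp (G M) (G M) p <-> G M p) /\
  (* Axiom III *)
  mu M (Rs M) + mu M (Is M) = E0 M /\
  (forall B, alg M B -> subset B (Rs M) ->
     mu M (preimage (PiR M) B) = mu M B) /\
  (forall B, alg M B ->
     mu2 M (setI (rect B setT) (G M)) =
     mu M B + eta M * mu2 M (setI (rect (preimage (PiR M) B) setT) (G M))).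

Definition is_morphism (M M' : structural_model) (phi : X M -> X M') : Prop :=
  eta M = eta M' /\
  (* M1 *)
  (forall B', alg M' B' -> alg M (preimage phi B')) /\
  (forall S', prod_alg (alg M') S' -> prod_alg (alg M) (preimage (prodmap phi) S')) /\
  (* M2 *)
  (forall x, phi (PiR M x) = PiR M' (phi x)) /\
  (* M3 *)
  (forall x y, G M (x, y) -> G M' (phi x, phi y)) /\
  (* M4 *)
  (forall B', alg M' B' -> mu M (preimage phi B') = mu M' B') /\
  (forall S', prod_alg (alg M') S' ->
     mu2 M (preimage (prodmap phi) S') = mu2 M' S').

(* Main.v *)
Require Import Defs.
From Stdlib Require Import Reals.
From Stdlib Require Import Classical FunctionalExtensionality PropExtensionality Lra.
Open Scope R_scope.

Lemma set_ext {T} (A B : set T) : (forall x, A x <-> B x) -> A = B.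
Proof. intros H; apply functional_extensionality; intros x; apply propositional_extensionality; auto. Qed.

Lemma alg_I {T} (A : set (set T)) B C : is_algebra A -> A B -> A C -> A (setI B C).
Proof.
  intros [H0 [HC HU]] HB HCc.
  replace (setI B C) with (setC (setU (setC B) (setC C))).
  - apply HC, HU; apply HC; auto.
  - apply set_ext; intros x; unfold setC, setU, setI; split.
    + intros H; split; apply NNPP; tauto.
    + tauto.
Qed.

Lemma alg_T {T} (A : set (set T)) : is_algebra A -> A setT.
Proof.
  intros [H0 [HC HU]]. replace (@setT T) with (setC (@set0 T)); [auto|].
  apply set_ext; intros x; unfold setC, set0, setT; tauto.
Qed.

Lemma prod_alg_algebra {T} (A : set (set T)) : is_algebra (prod_alg A).
Proof.
  split; [|split].
  - intros C [H0 _] _; auto.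
  - intros B HB C HCa Hr. destruct HCa as [H0 [HC HU]]. apply HC. apply HB; [split; auto|auto].
  - intros B D HB HD C HCa Hr. pose proof HCa as [H0 [HC HU]]. apply HU; [apply HB|apply HD]; auto.
Qed.

Lemma rect_in {T} (A : set (set T)) B1 B2 : A B1 -> A B2 -> prod_alg A (rect B1 B2).
Proof. intros H1 H2 C _ Hr; auto. Qed.

Lemma mono {T} (A : set (set T)) m S U : is_algebra A -> fin_add_measure A m ->
  A S -> A U -> subset S U -> m S <= m U.
Proof.
  intros Halg [Hp [H0 Hadd]] HS HU Hsub.
  assert (HD : A (setI U (setC S))) by (apply alg_I; auto; apply Halg; auto).
  replace U with (setU S (setI U (setC S))).
  - rewrite Hadd; auto.
    + pose proof (Hp _ HD); lra.
    + intros x h1 [_ h2]; auto.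
  - apply set_ext; intros x; unfold setU, setI, setC; split.
    + intros [h|[h _]]; auto.
    + intros h; destruct (classic (S x)); auto.
Qed.

Theorem proposition8p5 (M M' : structural_model) (phi : X M -> X M') :
  admissible M -> admissible M' -> eta M = eta M' -> eta M < 1 ->
  is_morphism M M' phi ->
  ((subset (preimage (prodmap phi) (G M')) (G M)) ->
   forall B', alg M' B' ->
     mu2 M' (setI (rect B' setT) (G M')) <=
       mu2 M (setI (rect (preimage phi B') setT) (G M)) /\
     mu2 M (setI (rect (preimage phi B') setT) (G M)) =
       mu M (preimage phi B') +
       eta M * mu2 M (setI (rect (preimage (PiR M) (preimage phi B')) setT) (G M))) /\
  ((forall y : X M', exists x : X M, phi x = y) ->
   (forall p, preimage (prodmap phi) (G M') p <-> G M p) ->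
   forall B', alg M' B' ->
     mu2 M' (setI (rect B' setT) (G M')) =
       mu M' B' + eta M' * mu2 M' (setI (rect (preimage (PiR M') B') setT) (G M'))).
Proof.
  intros HM HM' Heta Hlt Hmor.
  destruct HM as (_ & Ha & Hmu & Hmu2 & Hrect & HR & HI & Hdis & HPiR & HG & _ & _ & HPP & HPid & HPalg & _ & _ & _ & _ & HPmu & HIII).
  destruct HM' as (_ & Ha' & Hmu' & Hmu2' & Hrect' & HR' & HI' & Hdis' & HPiR' & HG' & _ & _ & HPP' & HPid' & HPalg' & _ & _ & _ & _ & HPmu' & HIII').
  destruct Hmor as (_ & HM1a & HM1b & HM2 & HM3 & HM4a & HM4b).
  assert (Hp : is_algebra (prod_alg (alg M))) by apply prod_alg_algebra.
  assert (Hp' : is_algebra (prod_alg (alg M'))) by apply prod_alg_algebra.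
  assert (Hin' : forall B', alg M' B' -> prod_alg (alg M') (setI (rect B' setT) (G M'))).
  { intros B' HB'. apply alg_I; auto. apply rect_in; auto. apply alg_T; auto. }
  assert (Hin : forall B, alg M B -> prod_alg (alg M) (setI (rect B setT) (G M))).
  { intros B HB. apply alg_I; auto. apply rect_in; auto. apply alg_T; auto. }
  split.
  - intros Hsub B' HB'. split.
    + rewrite <- (HM4b _ (Hin' _ HB')).
      apply (mono (prod_alg (alg M))); [exact Hp|exact Hmu2|exact (HM1b _ (Hin' _ HB'))|exact (Hin _ (HM1a _ HB'))|].
      intros [x y] [[h1 _] h2]; split; [split; [exact h1|exact I]|].
      apply Hsub; exact h2.
    + apply HIII, HM1a; auto.
  - intros _ Hiff B' HB'.
    assert (HPB : alg M' (preimage (PiR M') B')).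
    { replace (preimage (PiR M') B') with (preimage (PiR M') (setI B' (Rs M'))).
      - apply HPalg'. apply alg_I; auto. intros x [_ h]; auto.
      - apply set_ext; intros x; unfold preimage, setI; split; [tauto|]. intros h; split; auto. }
    assert (E : forall C', preimage (prodmap phi) (setI (rect C' setT) (G M')) =
                           setI (rect (preimage phi C') setT) (G M)).
    { intros C'. apply set_ext; intros [x y]; unfold preimage, setI, rect, prodmap, setT; simpl.
      specialize (Hiff (x, y)); unfold preimage, prodmap in Hiff; simpl in Hiff. tauto. }
    rewrite <- (HM4b _ (Hin' _ HB')), E, HIII by (apply HM1a; auto).
    rewrite <- (HM4b _ (Hin' _ HPB)), E, HM4a by auto.
    rewrite Heta.
    replace (preimage (PiR M) (preimage phi B')) with (preimage phi (preimage (PiR M') B')); auto.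
    apply set_ext; intros x; unfold preimage; rewrite HM2; tauto.
Qed.
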